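(* For every $n\ge 0$, the numbers of classes of each type satisfy \begin{align*} |\overline{t}_n^{\mathcal{S}_2}| &= |t_n^{\mathcal{S}_2}| - \sum_{m=0}^{n-1}\alpha_{n,m}|\overline{t}_m^{\mathcal{S}_2}|,\\ |\overline{t}_n^{\langle r\rangle}| &= |t_n^{\langle r\rangle}| - \sum_{m=0}^{n-1}\alpha_{n,m}|\overline{t}_m^{\langle r\rangle}|,\\ |\overline{t}_n^{\langle rc\rangle}| &= |t_n^{\langle rc\rangle}| - \sum_{m=0}^{n-1}\alpha_{n,m}|\overline{t}_m^{\langle rc\rangle}|,\\ |\overline{t}_n^{\langle c\rangle}| &= |t_n^{\langle c\rangle}| - \sum_{m=0}^{n-1}\Big[\binom{n}{m}|\overline{t}_m^{\langle c\rangle}| + \tfrac12\beta_{n,m}|\overline{t}_m^{\mathcal{S}_2}|\Big],\\ |\overline{t}_n^{\langle 1\rangle}| &= |t_n^{\langle 1\rangle}| - \sum_{m=0}^{n-1}\Big[\binom{n}{m}|\overline{t}_m^{\langle 1\rangle}| + \tfrac12\beta_{n,m}\big(|\overline{t}_m^{\langle r\rangle}|+|\overline{t}_m^{\langle rc\rangle}|\big)\Big]. \end{align*}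
   Context: Binary setting: $\mathcal{A}=\{0,1\}$, $L_2(n)$ is the set of all $f:\{0,1\}^n\to\{0,1\}$ and $\overline{L}_2(n)\subseteq L_2(n)$ the irreducible ones (those depending on every argument: for each index $j$ some change of only the $j$-th input letter changes the output). Let $c$ be the transposition $0\leftrightarrow1$ applied letterwise to words, and $r$ the reversal of words, $r(a_1\dots a_n)=a_n\dots a_1$. Operators on rules: $\hat{c}f(w)=c\,f(c\,w)$, $\hat{r}f(w)=f(rw)$, $\widehat{rc}=\hat r\hat c$. The group $\mathcal{S}_2=\{1,r,c,rc\}$ (Klein four-group) acts on $L_2(n)$ and on $\overline{L}_2(n)$ in this way; $[f]$ denotes the orbit of $f$ and $\mathrm{stab}(f)=\{\alpha\in\mathcal{S}_2\mid\hat\alpha f=f\}$ (constant on orbits since the group is abelian). For a subgroup $U\le\mathcal{S}_2$ (i.e. $\langle 1\rangle,\langle r\rangle,\langle c\rangle,\langle rc\rangle,\mathcal{S}_2$), put $t_n^U=\{[f]\in L_2(n)/\mathcal{S}_2\mid \mathrm{stab}(f)=U\}$ and $\overline{t}_n^U=\{[f]\in\overline{L}_2(n)/\mathcal{S}_2\mid\mathrm{stab}(f)=U\}$. For $n\ge m\ge0$: $\alpha_{n,m}=0$ if $n$ is even and $m$ is odd, and $\alpha_{n,m}=\binom{\lfloor n/2\rfloor}{\lfloor m/2\rfloor}$ otherwise; $\beta_{n,m}=\binom{n}{m}-\alpha_{n,m}$. *)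

(* Defs.v *)
From mathcomp Require Import all_boot all_order all_algebra.
Set Implicit Arguments. Unset Strict Implicit. Unset Printing Implicit Defensive.

(* Words of length n over {0,1} (false = 0, true = 1). *)
Definition word (n : nat) := {ffun 'I_n -> bool}.
Definition rule (n : nat) := {ffun word n -> bool}.

Definition wc n (w : word n) : word n := [ffun i => ~~ w i].
Definition wr n (w : word n) : word n := [ffun i => w (rev_ord i)].

Definition hat_c n (f : rule n) : rule n := [ffun w => ~~ f (wc w)].
Definition hat_r n (f : rule n) : rule n := [ffun w => f (wr w)].

(* The Klein four-group S_2 = {1, r, c, rc}: the element (b1, b2) stands for
   r^b1 c^b2. *)
Definition S2 := (bool * bool)%type.
Definition g1 : S2 := (false, false).
Definition gr : S2 := (true, false).
Definition gc : S2 := (false, true).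
Definition grc : S2 := (true, true).

Definition act n (a : S2) (f : rule n) : rule n :=
  let g := if a.2 then hat_c f else f in
  if a.1 then hat_r g else g.

Definition irreducible n (f : rule n) : bool :=
  [forall j : 'I_n, exists w : word n, exists w' : word n,
    [forall i : 'I_n, (i != j) ==> (w i == w' i)] && (f w != f w')].

Definition orbit n (f : rule n) : {set rule n} := [set act a f | a : S2].
Definition stab n (f : rule n) : {set S2} := [set a | act a f == f].

Definition U1 : {set S2} := [set g1].
Definition Ur : {set S2} := [set g1; gr].
Definition Uc : {set S2} := [set g1; gc].
Definition Urc : {set S2} := [set g1; grc].
Definition US2 : {set S2} := [set: S2].

Definition t n (U : {set S2}) : {set {set rule n}} :=
  [set orbit f | f in [set f : rule n | stab f == U]].
Definition tbar n (U : {set S2}) : {set {set rule n}} :=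
  [set orbit f | f in [set f : rule n | irreducible f && (stab f == U)]].

Definition alpha (n m : nat) : nat :=
  if ~~ odd n && odd m then 0 else 'C(n./2, m./2).
Definition beta (n m : nat) : rat := ('C(n, m))%:R - (alpha n m)%:R.

(* Main.v *)
Require Import Defs.
From mathcomp Require Import all_boot all_order all_algebra.
From mathcomp Require Import zify ring lra.
Import GRing.Theory Num.Theory.
Set Implicit Arguments. Unset Strict Implicit. Unset Printing Implicit Defensive.


Lemma wcK n : involutive (@wc n).
Proof. by move=> w; apply/ffunP=> i; rewrite !ffunE negbK. Qed.
Lemma wrK n : involutive (@wr n).
Proof. by move=> w; apply/ffunP=> i; rewrite !ffunE rev_ordK. Qed.
Lemma wcr n (w : word n) : wc (wr w) = wr (wc w).
Proof. by apply/ffunP=> i; rewrite !ffunE. Qed.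
Lemma hat_cK n : involutive (@hat_c n).
Proof. by move=> f; apply/ffunP=> w; rewrite !ffunE wcK negbK. Qed.
Lemma hat_rK n : involutive (@hat_r n).
Proof. by move=> f; apply/ffunP=> w; rewrite !ffunE wrK. Qed.
Lemma hat_cr n (f : rule n) : hat_c (hat_r f) = hat_r (hat_c f).
Proof. by apply/ffunP=> w; rewrite !ffunE wcr. Qed.

Definition sxor (a b : S2) : S2 := (a.1 (+) b.1, a.2 (+) b.2).

Lemma actM n a b (f : rule n) : act a (act b f) = act (sxor a b) f.
Proof.
case: a => [[] []]; case: b => [[] []];
  by rewrite /act /sxor /= ?hat_cK ?hat_rK ?hat_cr ?hat_cK ?hat_rK.
Qed.
Lemma act1 n (f : rule n) : act g1 f = f. Proof. by []. Qed.
Lemma actK n a : involutive (@act n a).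
Proof. by move=> f; rewrite actM; case: a => [[] []]. Qed.
Lemma act_inj n a : injective (@act n a).
Proof. exact: inv_inj (actK a). Qed.
Lemma actC n a b (f : rule n) : act a (act b f) = act b (act a f).
Proof. by rewrite !actM; case: a => [[] []]; case: b => [[] []]. Qed.

Lemma stab_act n a (f : rule n) : stab (act a f) = stab f.
Proof.
apply/setP=> b; rewrite !inE actC; apply/eqP/eqP => [/act_inj//|->//].
Qed.

Lemma orbit_self n (f : rule n) : f \in Defs.orbit f.
Proof. by apply/imsetP; exists g1. Qed.

Lemma orbit_in n (f g : rule n) : f \in Defs.orbit g -> Defs.orbit f = Defs.orbit g.
Proof.
case/imsetP=> a _ ->; apply/setP=> h; apply/imsetP/imsetP=> [[b _ ->]|[b _ ->]].
  by exists (sxor b a) => //; rewrite actM.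
exists (sxor b a) => //; rewrite actM; congr act.
by case: a => [[] []]; case: b => [[] []].
Qed.

Lemma sxorK a : involutive (sxor a).
Proof. by case: a => [[] []] [[] []]. Qed.

Lemma card_orbit n (f : rule n) : #|Defs.orbit f| * #|stab f| = 4.
Proof.
have -> : 4 = \sum_(a in [set: S2]) 1 by rewrite sum1_card cardsT card_prod card_bool.
rewrite (partition_big_imset (fun a => act a f)) /=.
have -> : [set act a f | a in [set: S2]] = Defs.orbit f.
  by apply/setP=> h; apply/imsetP/imsetP=> [[a _ ->]|[a _ ->]]; exists a.
rewrite -sum_nat_const; apply: eq_bigr => h /imsetP [b _ ->].
rewrite sum1_card -(card_imset (stab f) (inv_inj (sxorK b))).
apply: eq_card => a; rewrite [RHS]unfold_in /= in_setT /=.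
apply/imsetP/eqP => [[c]|E].
  by rewrite inE => /eqP E ->; rewrite -actM E.
exists (sxor b a); last by rewrite sxorK.
by rewrite inE -actM E actK.
Qed.

Lemma count_orbits n (A : {set rule n}) (U : {set S2}) :
  (forall a f, f \in A -> act a f \in A) ->
  (forall f, f \in A -> stab f = U) ->
  #|[set Defs.orbit f | f in A]| * 4 = #|A| * #|U|.
Proof.
move=> Acl AU.
rewrite -[#|A|]sum1_card (partition_big_imset (@Defs.orbit n)) /= big_distrl /=.
rewrite -sum_nat_const; apply/esym/eq_bigr => B /imsetP [g gA ->].
rewrite -(card_orbit g) (AU g gA) sum1_card; congr (_ * _).
apply: eq_card => f; rewrite [LHS]unfold_in /=; apply/andP/idP => [[_ /eqP <-]|fo].
  exact: orbit_self.
split; last by rewrite (orbit_in fo).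
by case/imsetP: fo => a _ ->; apply: Acl.
Qed.


Definition flip n (j : 'I_n) (w : word n) : word n :=
  [ffun i => if i == j then ~~ w i else w i].
Definition ess n (f : rule n) : {set 'I_n} :=
  [set j | [exists w, f (flip j w) != f w]].

Lemma flipK n (j : 'I_n) : involutive (flip j).
Proof. by move=> w; apply/ffunP=> i; rewrite !ffunE; case: eqP; rewrite ?negbK. Qed.

Lemma irreducibleE n (f : rule n) : irreducible f = (ess f == [set: 'I_n]).
Proof.
apply/forallP/eqP => [H|H j].
  apply/setP=> j; rewrite inE in_setT.
  case/existsP: (H j) => w /existsP [w' /andP [/forallP E D]].
  apply/existsP; exists w.
  case: (boolP (w' j == w j)) => wj.
    suff ww : w' = w by rewrite ww eqxx in D.
    apply/ffunP=> i; case: (eqVneq i j) => [->|ij]; first exact/eqP.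
    by apply/esym/eqP; move/implyP: (E i); apply.
  suff ww : w' = flip j w by rewrite -ww eq_sym.
  apply/ffunP=> i; rewrite ffunE; case: (eqVneq i j) => [->|ij].
    by move: wj; case: (w' j); case: (w j).
  by apply/esym/eqP; move/implyP: (E i); apply.
have : j \in ess f by rewrite H in_setT.
rewrite inE => /existsP [w D]; apply/existsP; exists w; apply/existsP.
exists (flip j w); rewrite eq_sym D andbT; apply/forallP=> i; apply/implyP=> ij.
by rewrite ffunE (negbTE ij).
Qed.

Lemma not_ess n (f : rule n) j w : j \notin ess f -> f (flip j w) = f w.
Proof. by rewrite inE negb_exists => /forallP /(_ w) /negPn /eqP. Qed.

Lemma ess_out n (f : rule n) (S : {set 'I_n}) (w w' : word n) :
  ess f \subset S -> (forall i, i \in S -> w i = w' i) -> f w = f w'.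
Proof.
move=> sub.
move Ek: #|[set i | w i != w' i]| => k.
elim: k w Ek => [|k IH] w Ek agree.
  have /setP E := cards0_eq Ek.
  congr (f _); apply/ffunP=> i; move: (E i); rewrite !inE => /negbFE/eqP //.
have : 0 < #|[set i | w i != w' i]| by rewrite Ek.
case/card_gt0P => j; rewrite inE => wj.
have jS : j \notin S by apply/negP => /agree /eqP; rewrite (negbTE wj).
have je : j \notin ess f by apply/negP => /(subsetP sub); rewrite (negbTE jS).
rewrite -(not_ess w je); apply: IH.
  have -> : [set i | flip j w i != w' i] = [set i | w i != w' i] :\ j.
    apply/setP=> i; rewrite !inE ffunE; case: (eqVneq i j) => [->|//].
    by move: wj; case: (w j); case: (w' j).
  by move: Ek; rewrite (cardsD1 j) inE wj => -[].
move=> i iS; rewrite ffunE; case: (eqVneq i j) => [ij|_]; last exact: agree.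
by move: iS; rewrite ij (negbTE jS).
Qed.

Lemma mem_rev_imset n (A : {set 'I_n}) (j : 'I_n) : (j \in (@rev_ord n) @: A) = (rev_ord j \in A).
Proof. by rewrite -{1}(rev_ordK j) mem_imset //; exact: rev_ord_inj. Qed.

Lemma wc_flip n j (w : word n) : wc (flip j w) = flip j (wc w).
Proof. by apply/ffunP=> i; rewrite !ffunE; case: eqP. Qed.
Lemma wr_flip n j (w : word n) : wr (flip j w) = flip (rev_ord j) (wr w).
Proof.
apply/ffunP=> i; rewrite !ffunE; congr (if _ then _ else _).
by apply/eqP/eqP => [<-|->]; rewrite rev_ordK.
Qed.

Lemma ess_c n (f : rule n) : ess (hat_c f) = ess f.
Proof.
apply/setP=> j; rewrite !inE; apply/existsP/existsP => [[w]|[w]].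
  by rewrite !ffunE wc_flip (inj_eq negb_inj); exists (wc w).
by exists (wc w); rewrite !ffunE wc_flip (inj_eq negb_inj) wcK.
Qed.

Lemma wrK' n : involutive (@wr n).
Proof. by move=> w; apply/ffunP=> i; rewrite !ffunE rev_ordK. Qed.

Lemma ess_r n (f : rule n) : ess (hat_r f) = (@rev_ord n) @: ess f.
Proof.
apply/setP=> j; rewrite mem_rev_imset !inE; apply/existsP/existsP => [[w]|[w]].
  by rewrite !ffunE wr_flip; exists (wr w).
by exists (wr w); rewrite !ffunE wr_flip wrK'.
Qed.

Lemma ess_act n a (f : rule n) :
  ess (act a f) = if a.1 then (@rev_ord n) @: ess f else ess f.
Proof. by case: a => [[] []]; rewrite /act /= ?ess_r ?ess_c. Qed.

Definition proj m n (s : 'I_m -> 'I_n) (w : word n) : word m := [ffun i => w (s i)].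
Definition ext m n (s : 'I_m -> 'I_n) (v : word m) : word n :=
  [ffun j => if [pick i | s i == j] is Some i then v i else false].
Definition embed m n (s : 'I_m -> 'I_n) (g : rule m) : rule n :=
  [ffun w => g (proj s w)].

Lemma projK m n (s : 'I_m -> 'I_n) : injective s -> cancel (ext s) (proj s).
Proof.
move=> si v; apply/ffunP=> i; rewrite !ffunE.
case: pickP => [i' /eqP /si -> //|/(_ i)]; by rewrite eqxx.
Qed.

Lemma proj_flip_in m n (s : 'I_m -> 'I_n) i w : injective s ->
  proj s (flip (s i) w) = flip i (proj s w).
Proof. by move=> si; apply/ffunP=> k; rewrite !ffunE (inj_eq si). Qed.

Lemma proj_flip_out m n (s : 'I_m -> 'I_n) j w : j \notin s @: setT ->
  proj s (flip j w) = proj s w.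
Proof.
move=> js; apply/ffunP=> k; rewrite !ffunE; case: eqP => // E.
by rewrite -E imset_f in js.
Qed.

Lemma ess_embed m n (s : 'I_m -> 'I_n) g : injective s ->
  ess (embed s g) = s @: ess g.
Proof.
move=> si; apply/setP=> j.
case: (boolP (j \in s @: setT)) => [/imsetP [i _ ->]|js].
  rewrite mem_imset // !inE; apply/existsP/existsP => [[w]|[v]].
    by rewrite !ffunE proj_flip_in //; exists (proj s w).
  by exists (ext s v); rewrite !ffunE proj_flip_in // projK.
rewrite !inE; apply/idP/idP.
  by case/existsP=> w; rewrite !ffunE proj_flip_out // eqxx.
by case/imsetP=> i _ E; rewrite E imset_f in js.
Qed.

Lemma embed_inj m n (s : 'I_m -> 'I_n) : injective s -> injective (embed s).
Proof.
move=> si g g' E; apply/ffunP=> v.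
by have := congr1 (fun f : rule n => f (ext s v)) E; rewrite !ffunE projK.
Qed.

Lemma embed_surj m n (s : 'I_m -> 'I_n) (f : rule n) : injective s ->
  ess f \subset s @: setT -> f = embed s [ffun v => f (ext s v)].
Proof.
move=> si sub; apply/ffunP=> w; rewrite !ffunE.
apply: ess_out sub _ => _ /imsetP [i _ ->].
rewrite !ffunE; case: pickP => [i' /eqP /si -> |/(_ i)]; rewrite ?ffunE ?eqxx //.
Qed.

Lemma embed_c m n (s : 'I_m -> 'I_n) g : embed s (hat_c g) = hat_c (embed s g).
Proof.
by apply/ffunP=> w; rewrite !ffunE; congr (~~ g _); apply/ffunP=> i; rewrite !ffunE.
Qed.

Lemma embed_r m n (s : 'I_m -> 'I_n) g :
  (forall i, s (rev_ord i) = rev_ord (s i)) ->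
  embed s (hat_r g) = hat_r (embed s g).
Proof.
move=> sr; apply/ffunP=> w; rewrite !ffunE; congr (g _); apply/ffunP=> i.
by rewrite !ffunE sr.
Qed.


Definition sigS n (S : {set 'I_n}) (i : 'I_#|S|) : 'I_n := enum_val i.

Lemma sig_inj n (S : {set 'I_n}) : injective (@sigS n S).
Proof. exact: enum_val_inj. Qed.

Lemma sig_im n (S : {set 'I_n}) : (@sigS n S) @: setT = S.
Proof.
apply/setP=> j; apply/imsetP/idP => [[i _ ->]|jS]; first exact: enum_valP.
by exists (enum_rank_in jS j) => //; rewrite /sigS enum_rankK_in.
Qed.

Definition ltI n : rel 'I_n := fun x y => (x < y)%N.

Lemma enum_sorted n (S : {set 'I_n}) : sorted (@ltI n) (enum S).
Proof.
have E : enum S = filter (mem S) (enum 'I_n).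
  rewrite -!deprecated_filter_index_enum -filter_predI; by apply: eq_filter => x /=; rewrite andbT.
rewrite E; apply: sorted_filter; first by move=> x y z; rewrite /ltI; apply: ltn_trans.
have := iota_ltn_sorted 0 n; rewrite -val_enum_ord sorted_map.
by apply: sub_sorted.
Qed.

Lemma sig_rev n (S : {set 'I_n}) : (@rev_ord n) @: S = S ->
  forall i, @sigS n S (rev_ord i) = rev_ord (@sigS n S i).
Proof.
move=> SS i.
set s := enum S.
have Es : s = map (@rev_ord n) (rev s).
  apply: (@irr_sorted_eq _ (@ltI n)).
  - by move=> x y z; rewrite /ltI; apply: ltn_trans.
  - by move=> x; rewrite /ltI ltnn.
  - exact: enum_sorted.
  - rewrite sorted_map rev_sorted; apply: sub_sorted (enum_sorted S).
    by move=> x y; rewrite /ltI /= => lt; have := ltn_ord y; lia.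
  - move=> x; rewrite -{2}(rev_ordK x) (mem_map (@rev_ord_inj n)) mem_rev.
    by rewrite /s !mem_enum -mem_rev_imset SS.
have sz : size s = #|S| by rewrite cardE.
rewrite /sigS !(enum_val_nth (sigS i)) -/s.
rewrite [in LHS]Es (nth_map (sigS i)); last by rewrite size_rev sz ltn_ord.
rewrite nth_rev; last by rewrite sz ltn_ord.
congr (rev_ord (nth _ _ _)); rewrite sz /= subnSK ?ltn_ord // subKn // ltnW // ltn_ord.
Qed.

Definition B m (U : {set S2}) : {set rule m} :=
  [set g : rule m | irreducible g && (stab g == U)].
Definition symm n (S : {set 'I_n}) := (@rev_ord n) @: S == S.

Lemma stab1 n (f : rule n) : g1 \in stab f. Proof. by rewrite inE. Qed.
Lemma stab_cl n (f : rule n) a b :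
  a \in stab f -> b \in stab f -> sxor a b \in stab f.
Proof. by rewrite !inE => /eqP Ea /eqP Eb; rewrite -actM Eb Ea. Qed.

Lemma setS2_eq (V U : {set S2}) : g1 \in V -> g1 \in U ->
  (V == U) = [&& (gr \in V) == (gr \in U), (gc \in V) == (gc \in U)
               & (grc \in V) == (grc \in U)].
Proof.
move=> V1 U1; apply/eqP/and3P => [->|[/eqP r /eqP c /eqP rc]]; first by rewrite !eqxx.
by apply/setP=> -[[] []]; [exact: rc| exact: r | exact: c | rewrite V1 U1].
Qed.

Lemma irr_act n a (g : rule n) : irreducible (act a g) = irreducible g.
Proof.
rewrite !irreducibleE ess_act; case: a.1 => //.
apply/eqP/eqP => [E|->]; last first.
  by apply/setP=> j; rewrite mem_rev_imset !in_setT.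
apply/setP=> j; move/setP: E => /(_ (rev_ord j)).
by rewrite mem_rev_imset rev_ordK !in_setT.
Qed.



Lemma ess_E n (S : {set 'I_n}) g : irreducible g -> ess (embed (@sigS n S) g) = S.
Proof.
by rewrite irreducibleE => /eqP Eg; rewrite ess_embed ?Eg ?sig_im //; exact: sig_inj.
Qed.

Lemma image_E n (S : {set 'I_n}) :
  [set f : rule n | ess f == S] = embed (@sigS n S) @: [set g | irreducible g].
Proof.
apply/setP=> f; rewrite inE; apply/eqP/imsetP => [Ef|[g]]; last first.
  by rewrite inE => /ess_E E ->.
have sub : ess f \subset (@sigS n S) @: setT by rewrite sig_im Ef.
have Ef' := embed_surj (@sig_inj n S) sub.
exists [ffun v => f (ext (@sigS n S) v)] => //.
rewrite inE irreducibleE; apply/eqP.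
apply: (imset_inj (@sig_inj n S)); rewrite -ess_embed; last exact: sig_inj.
by rewrite -Ef' Ef sig_im.
Qed.

Lemma act_E n (S : {set 'I_n}) a g : (~~ a.1 || symm S) ->
  act a (embed (@sigS n S) g) = embed (@sigS n S) (act a g).
Proof.
case: a => [[] c] /= H; rewrite /act /=.
  have sr := sig_rev (eqP H).
  by case: c; rewrite ?embed_c (embed_r _ sr) ?embed_c.
by case: c; rewrite ?embed_c.
Qed.

Lemma stab_E_sym n (S : {set 'I_n}) g : symm S ->
  stab (embed (@sigS n S) g) = stab g.
Proof.
move=> sS; apply/setP=> a; rewrite !inE act_E ?sS ?orbT //.
by rewrite (inj_eq (embed_inj (@sig_inj n S))).
Qed.

Lemma stab_E_nsym n (S : {set 'I_n}) g : ~~ symm S -> irreducible g ->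
  stab (embed (@sigS n S) g) = stab g :&: Uc.
Proof.
move=> nS ig; apply/setP=> -[a1 a2]; rewrite !inE.
case: a1.
  rewrite andbF; apply/negP => /eqP E.
  have := congr1 (@ess n) E; rewrite ess_act /= ess_E // => SS.
  by rewrite /symm SS eqxx in nS.
rewrite act_E // (inj_eq (embed_inj (@sig_inj n S))).
by case: a2; rewrite /= ?orbT ?andbT.
Qed.

Lemma card_ess_stab n (S : {set 'I_n}) U :
  #|[set f : rule n | (ess f == S) && (stab f == U)]| =
  #|[set g : rule #|S| | irreducible g && (stab (embed (@sigS n S) g) == U)]|.
Proof.
rewrite -(card_imset _ (embed_inj (@sig_inj n S))); apply: eq_card => f.
rewrite inE; apply/andP/imsetP => [[Ef Uf]|[g]].
  have : f \in [set f : rule n | ess f == S] by rewrite inE.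
  rewrite image_E => /imsetP [g]; rewrite inE => ig Efg.
  by exists g => //; rewrite inE ig -Efg.
by rewrite inE => /andP [ig sg] ->; rewrite ess_E // eqxx.
Qed.

Lemma DL_sym n (S : {set 'I_n}) U : symm S ->
  #|[set f : rule n | (ess f == S) && (stab f == U)]| = #|B #|S| U|.
Proof.
move=> sS; rewrite card_ess_stab; apply: eq_card => g; rewrite !inE.
by rewrite stab_E_sym.
Qed.

Lemma card_disjU T (A C : {set T}) : A :&: C = set0 -> #|A :|: C| = #|A| + #|C|.
Proof. by move=> H; rewrite cardsU H cards0 subn0. Qed.

Lemma DL_nsym_c n (S : {set 'I_n}) : ~~ symm S ->
  #|[set f : rule n | (ess f == S) && (stab f == Uc)]| = #|B #|S| Uc| + #|B #|S| US2|.
Proof.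
move=> nS; rewrite card_ess_stab -card_disjU; last first.
  apply/setP=> g; rewrite !inE; apply/negP => /andP [/andP [_ /eqP ->] /andP [_]].
  by move/eqP/setP/(_ gr); rewrite !inE.
apply: eq_card => g; rewrite !inE; case: (boolP (irreducible g)) => //= ig.
rewrite stab_E_nsym // !setS2_eq ?inE ?stab1 ?eqxx //=.
have c1 : gr \in stab g -> gc \in stab g -> grc \in stab g := @stab_cl _ g gr gc.
have c2 : gr \in stab g -> grc \in stab g -> gc \in stab g := @stab_cl _ g gr grc.
have c3 : gc \in stab g -> grc \in stab g -> gr \in stab g := @stab_cl _ g gc grc.
move: c1 c2 c3; rewrite !inE /gr /gc /grc /=.
by case: (act (true,false) g == g); case: (act (false,true) g == g);
  case: (act (true,true) g == g) => //= c1 c2 c3; try by [move: (c1 isT isT)|move: (c2 isT isT)|move: (c3 isT isT)].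
Qed.

Lemma DL_nsym_1 n (S : {set 'I_n}) : ~~ symm S ->
  #|[set f : rule n | (ess f == S) && (stab f == U1)]| =
  #|B #|S| U1| + #|B #|S| Ur| + #|B #|S| Urc|.
Proof.
move=> nS; rewrite card_ess_stab -card_disjU; last first.
  apply/setP=> g; rewrite !inE; apply/negP => /andP [/andP [_ /eqP ->] /andP [_]].
  by move/eqP/setP/(_ gr); rewrite !inE.
rewrite -card_disjU; last first.
  apply/setP=> g; rewrite !inE; apply/negP => /andP [/orP []/andP [_ /eqP ->] /andP [_]].
    by move/eqP/setP/(_ grc); rewrite !inE.
  by move/eqP/setP/(_ gr); rewrite !inE.
apply: eq_card => g; rewrite !inE; case: (boolP (irreducible g)) => //= ig.
rewrite stab_E_nsym // !setS2_eq ?inE ?stab1 ?eqxx //=.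
have c1 : gr \in stab g -> gc \in stab g -> grc \in stab g := @stab_cl _ g gr gc.
have c2 : gr \in stab g -> grc \in stab g -> gc \in stab g := @stab_cl _ g gr grc.
have c3 : gc \in stab g -> grc \in stab g -> gr \in stab g := @stab_cl _ g gc grc.
move: c1 c2 c3; rewrite !inE /gr /gc /grc /=.
by case: (act (true,false) g == g); case: (act (false,true) g == g);
  case: (act (true,true) g == g) => //= c1 c2 c3; try by [move: (c1 isT isT)|move: (c2 isT isT)|move: (c3 isT isT)].
Qed.

Lemma DL_nsym_0 n (S : {set 'I_n}) U : ~~ symm S -> U \in [:: Ur; Urc; US2] ->
  #|[set f : rule n | (ess f == S) && (stab f == U)]| = 0.
Proof.
move=> nS UU; rewrite card_ess_stab; apply/eqP; rewrite cards_eq0; apply/eqP.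
apply/setP=> g; rewrite !inE; apply/negP => /andP [ig].
rewrite stab_E_nsym //.
move: UU; rewrite !inE => /or3P [] /eqP -> /eqP/setP.
- by move/(_ gr); rewrite !inE /= ?andbF.
- by move/(_ grc); rewrite !inE /= ?andbF.
- by move/(_ gr); rewrite !inE /= ?andbF.
Qed.


Lemma hn n : n = n./2 * 2 + odd n.
Proof. by rewrite muln2 addnC odd_double_half. Qed.

Lemma hn_odd n : odd n -> n = n./2 * 2 + 1.
Proof. by move=> on; have := hn n; rewrite on. Qed.
Lemma hn_even n : ~~ odd n -> n = n./2 * 2.
Proof. by move=> on; have := hn n; rewrite (negbTE on) addn0. Qed.

Lemma half_le n : n./2 <= n.
Proof. have := hn n; lia. Qed.

Definition wid n (i : 'I_n./2) : 'I_n := widen_ord (half_le n) i.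
Definition build n (T : {set 'I_n./2}) : {set 'I_n} :=
  (@wid n) @: T :|: (fun i => rev_ord (wid i)) @: T.
Definition Mset n : {set 'I_n} := [set j : 'I_n | (2 * j).+1 == n].
Definition low n (S : {set 'I_n}) : {set 'I_n./2} := [set i | wid i \in S].

Lemma mem_build n T (j : 'I_n) :
  (j \in build T) = [exists i in T, (val j == val i) || (val j == n - (val i).+1)].
Proof.
rewrite inE; apply/orP/existsP => [[]/imsetP [i iT ->]|[i /andP [iT /orP [] /eqP E]]].
- by exists i; rewrite iT eqxx.
- by exists i; rewrite iT /= eqxx orbT.
- by left; apply/imsetP; exists i => //; apply: val_inj.
- by right; apply/imsetP; exists i => //; apply: val_inj.
Qed.

Lemma memM n (j : 'I_n) : (j \in Mset n) = ((2 * j).+1 == n).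
Proof. by rewrite inE. Qed.

Lemma build_nM n T (j : 'I_n) : j \in build T -> j \notin Mset n.
Proof.
rewrite mem_build memM => /existsP [i /andP [_ /orP [] /eqP E]];
  move: E => /= E; have := hn n; have := ltn_ord i; lia.
Qed.

Lemma low_build n (T : {set 'I_n./2}) (M : {set 'I_n}) : M \subset Mset n -> low (build T :|: M) = T.
Proof.
move=> sM; apply/setP=> i; rewrite inE in_setU.
case: (boolP (wid i \in M)) => [/(subsetP sM)|_]; rewrite ?orbF.
  by rewrite memM /=; have := hn n; have := ltn_ord i; lia.
rewrite mem_build; apply/existsP/idP => [[i' /andP [i'T /orP [] /eqP E]]|iT].
- by have -> : i = i' by apply: val_inj.
- by have := hn n; have := ltn_ord i; have := ltn_ord i'; move: E => /=; lia.
- by exists i; rewrite iT eqxx.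
Qed.

Lemma Mset_build n (T : {set 'I_n./2}) (M : {set 'I_n}) : M \subset Mset n -> (build T :|: M) :&: Mset n = M.
Proof.
move=> sM; apply/setP=> j; rewrite in_setI in_setU.
case: (boolP (j \in M)) => [/(subsetP sM) ->|jM]; first by rewrite orbT.
by rewrite orbF; apply/negP => /andP [/build_nM/negP H /H].
Qed.

Lemma card_build n (T : {set 'I_n./2}) : #|build T| = 2 * #|T|.
Proof.
rewrite card_disjU; last first.
  apply/setP=> j; rewrite !inE; apply/negP => /andP [/imsetP [i _ ->] /imsetP [i' _ E]].
  by move: (congr1 val E) => /=; have := hn n; have := ltn_ord i; have := ltn_ord i'; lia.
rewrite !card_imset ?mul2n ?addnn //.
  by move=> x y /(congr1 val) /= E; apply: val_inj => /=; have := hn n; have := ltn_ord x; have := ltn_ord y; lia.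
by move=> x y /(congr1 val) E; apply: val_inj.
Qed.

Lemma Mset_card n : #|Mset n| = odd n.
Proof.
case: (boolP (odd n)) => on.
  have kn : n./2 < n by have := hn n; rewrite on; lia.
  rewrite ?on /= -(cards1 (Ordinal kn)); apply: eq_card => j; rewrite memM inE.
  apply/eqP/eqP => [E|->]; first by apply: val_inj => /=; have := hn n; rewrite on; lia.
  by rewrite /=; have := hn n; rewrite on; lia.
apply/eqP; rewrite cards_eq0; apply/eqP/setP => j; rewrite memM inE.
by apply/eqP; have := hn n; rewrite (negbTE on); lia.
Qed.

Lemma symm_build n (T : {set 'I_n./2}) (M : {set 'I_n}) : M \subset Mset n -> symm (build T :|: M).
Proof.
move=> sM; apply/eqP/setP=> j; rewrite mem_rev_imset !in_setU.
have Mrev : forall x, x \in Mset n -> rev_ord x = x.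
  by move=> x; rewrite memM => /eqP E; apply: val_inj => /=; lia.
case: (boolP (j \in M)) => [jM|jM].
  by rewrite Mrev ?jM ?orbT //; apply: (subsetP sM).
case: (boolP (rev_ord j \in M)) => [rM|rM].
  have E := Mrev _ (subsetP sM _ rM); rewrite rev_ordK in E; by move: rM; rewrite -E (negbTE jM).
rewrite !orbF -!in_setU -/(build T) !mem_build; apply/existsP/existsP => -[i /andP [iT /orP [] /eqP E]];
  exists i; rewrite iT /=; move: E => /= E; have := ltn_ord j; have := ltn_ord i; have := hn n => *; apply/orP; first [by left; apply/eqP; lia | by right; apply/eqP; lia].
Qed.

Lemma build_low n S : symm S -> S = build (low S) :|: (S :&: Mset n).
Proof.
move=> /eqP sS; apply/setP=> j; rewrite in_setU in_setI.
have Sr : forall x, (rev_ord x \in S) = (x \in S).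
  by move=> x; rewrite -mem_rev_imset sS.
case: (boolP (j \in Mset n)) => jM; rewrite ?andbT ?andbF ?orbF.
  by case: (j \in S); rewrite ?orbT ?orbF //; apply/esym/negP => /build_nM; rewrite jM.
rewrite mem_build; apply/idP/existsP => [jS|[i /andP [] ]].
  move: jM; rewrite memM => jM.
  case: (ltnP j n./2) => jk.
    by exists (Ordinal jk); rewrite /= eqxx andbT inE /wid; move: jS; congr (_ \in S); apply: val_inj.
  have rk : n - j.+1 < n./2 by have := hn n; have := ltn_ord j; move: jM; lia.
  exists (Ordinal rk); rewrite /= inE orbC; apply/andP; split.
    rewrite -Sr in jS; move: jS; congr (_ \in S); exact: val_inj.
  by apply/eqP; have := ltn_ord j; lia.
rewrite inE => iS /orP [] /eqP E.
  by move: iS; congr (_ \in S); apply: val_inj.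
by rewrite -Sr; move: iS; congr (_ \in S); apply: val_inj => /=; move: E => /= E; have := ltn_ord i; have := hn n; lia.
Qed.

Lemma half_lt n : odd n -> n./2 < n.
Proof. by move=> on; have := hn n; rewrite on; lia. Qed.

Definition phi n (p : {set 'I_n./2} * bool) : {set 'I_n} :=
  build p.1 :|: (if p.2 then Mset n else set0).

Lemma phi_sub n b : (if b then Mset n else set0) \subset Mset n.
Proof. by case: b; rewrite ?sub0set. Qed.

Lemma card_phi n p : #|phi (n:=n) p| = 2 * #|p.1| + (p.2 && odd n).
Proof.
rewrite /phi card_disjU ?card_build; last first.
  apply/setP=> j; rewrite in_setI in_set0; apply/negP => /andP [/build_nM jM].
  by move/(subsetP (phi_sub n p.2)); rewrite (negbTE jM).
by case: p.2; rewrite ?Mset_card ?cards0.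
Qed.

Lemma count_draws k j : #|[set T : {set 'I_k} | #|T| == j]| = 'C(k, j).
Proof. by rewrite card_draws card_ord. Qed.

Lemma mem_pair_imset (A : finType) (X : {set A}) (b : bool) T c :
  ((T, c) \in (fun T => (T, b)) @: X) = (c == b) && (T \in X).
Proof.
apply/imsetP/andP => [[T' TX [-> ->]]|[/eqP -> TX]]; first by rewrite eqxx.
by exists T.
Qed.

Lemma ar1 x m : odd m -> (2 * x + 1 == m) = (x == m./2).
Proof. by move/hn_odd => H; apply/eqP/eqP; lia. Qed.
Lemma ar2 x m : odd m -> (2 * x == m) = false.
Proof. by move/hn_odd => H; apply/eqP; lia. Qed.
Lemma ar3 x m : ~~ odd m -> (2 * x == m) = (x == m./2).
Proof. by move/hn_even => H; apply/eqP/eqP; lia. Qed.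
Lemma ar4 x m : ~~ odd m -> (2 * x + 1 == m) = false.
Proof. by move/hn_even => H; apply/eqP; lia. Qed.

Lemma card_sym n (m : nat) :
  #|[set S : {set 'I_n} | (#|S| == m) && symm S]| = alpha n m.
Proof.
pose D := [set p : {set 'I_n./2} * bool |
             (2 * #|p.1| + (p.2 && odd n) == m) && (p.2 ==> odd n)].
have E1 : [set S : {set 'I_n} | (#|S| == m) && symm S] = (@phi n) @: D.
  apply/setP=> S; rewrite inE; apply/andP/imsetP => [[/eqP cS sS]|[p]].
    have Ecap : S :&: Mset n = if S :&: Mset n != set0 then Mset n else set0.
      case: eqP => [->//|/eqP ne] /=.
      apply/eqP; rewrite eqEcard subsetIr Mset_card.
      move: ne; rewrite -card_gt0; case: (odd n) => //.
    have eqS : phi (low S, S :&: Mset n != set0) = S.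
      by rewrite /phi /= -Ecap -build_low.
    exists (low S, S :&: Mset n != set0) => //.
    rewrite inE /=; apply/andP; split.
      by rewrite -cS -{3}eqS card_phi.
    apply/implyP => ne; move: ne; rewrite -card_gt0 => ne.
    have : 0 < #|Mset n| by apply: leq_trans ne (subset_leq_card (subsetIr _ _)).
    by rewrite Mset_card; case: (odd n).
  rewrite inE => /andP [/eqP cp _] ->; split; first by rewrite card_phi cp.
  exact: symm_build (phi_sub n p.2).
rewrite E1 card_in_imset; last first.
  move=> p q; rewrite !inE => /andP [_ pD] /andP [_ qD] Epq.
  have e1 : p.1 = q.1.
    by rewrite -(low_build p.1 (phi_sub n p.2)) -/(phi p) Epq /phi low_build // phi_sub.
  have e2 : (if p.2 then Mset n else set0) = (if q.2 then Mset n else set0).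
    by rewrite -(Mset_build p.1 (phi_sub n p.2)) -/(phi p) Epq /phi Mset_build // phi_sub.
  case: p q pD qD e1 e2 Epq => [T1 b1] [T2 b2] /= pD qD -> e2 _; congr pair.
  move: pD qD e2; case: b1; case: b2 => //= on1 on2 /setP.
    move=> /(_ (Ordinal (half_lt on1))); rewrite memM in_set0 /=.
    by have := hn n; rewrite on1 => hh; move/eqP; lia.
  move=> /(_ (Ordinal (half_lt on2))); rewrite memM in_set0 /=.
  by have := hn n; rewrite on2 => hh; move/eqP; lia.
have -> : D = ((fun T => (T, false)) @: [set T : {set 'I_n./2} | 2 * #|T| == m])
   :|: ((fun T => (T, true)) @: [set T : {set 'I_n./2} | odd n && (2 * #|T| + 1 == m)]).
  apply/setP=> -[T c]; rewrite inE in_setU !mem_pair_imset !inE /=.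
  case: c => /=; [by case: (odd n); rewrite ?andbF ?andbT | by rewrite addn0 andbT orbF].
rewrite card_disjU; last first.
  apply/setP=> -[T c]; rewrite in_setI in_set0 !mem_pair_imset.
  by case: c; rewrite ?andbF.
rewrite !card_imset; try by move=> x y [].
rewrite /alpha; case: (boolP (odd m)) => om; case: (boolP (odd n)) => on /=.
- rewrite (_ : [set T : {set 'I_n./2} | 2 * #|T| == m] = set0) ?cards0 ?add0n; last first.
    by apply/setP=> T; rewrite !inE ar2.
  by apply: (etrans _ (count_draws _ _)); apply: eq_card => T; rewrite !inE ar1.
- rewrite (_ : [set T : {set 'I_n./2} | 2 * #|T| == m] = set0) ?cards0 ?add0n; last first.
    by apply/setP=> T; rewrite !inE ar2.
  by [].
- rewrite [X in _ + X = _](_ : _ = 0) ?addn0; last first.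
    by apply/eqP; rewrite cards_eq0; apply/eqP/setP => T; rewrite !inE ar4.
  by apply: (etrans _ (count_draws _ _)); apply: eq_card => T; rewrite !inE ar3.
- rewrite [X in _ + X = _](_ : _ = 0) ?addn0; last first.
    by apply/eqP; rewrite cards_eq0; apply/eqP/setP => T; rewrite !inE.
  by apply: (etrans _ (count_draws _ _)); apply: eq_card => T; rewrite !inE ar3.
Qed.


Definition N n U := #|[set f : rule n | stab f == U]|.

Lemma orbit_t n U : #|t n U| * 4 = N n U * #|U|.
Proof.
apply: count_orbits => [a f|f]; rewrite !inE; last by move/eqP.
by rewrite stab_act.
Qed.

Lemma orbit_tbar n U : #|tbar n U| * 4 = #|B n U| * #|U|.
Proof.
apply: count_orbits => [a f|f]; rewrite !inE; last by case/andP=> _ /eqP.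
by rewrite stab_act irr_act.
Qed.

Lemma sum_if (T : finType) (p q : pred T) (a b : nat) :
  \sum_(S | p S) (if q S then a else b) =
  #|[set S | p S && q S]| * a + #|[set S | p S && ~~ q S]| * b.
Proof.
rewrite (bigID q) /=; congr addn.
  rewrite (eq_bigr (fun _ => a)); last by move=> S /andP [_ ->].
  by rewrite sum_nat_const; congr muln; apply: eq_card => S; rewrite inE.
rewrite (eq_bigr (fun _ => b)); last by move=> S /andP [_ /negbTE ->].
by rewrite sum_nat_const; congr muln; apply: eq_card => S; rewrite inE.
Qed.

Lemma card_nsym n m :
  #|[set S : {set 'I_n} | (#|S| == m) && ~~ symm S]| = 'C(n, m) - alpha n m.
Proof.
have := sum_if (fun S : {set 'I_n} => #|S| == m) (@symm n) 1 1.
rewrite (eq_bigr (fun _ => 1)); last by move=> S _; case: symm.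
rewrite sum1_card !muln1 card_sym.
have -> : #|[pred S : {set 'I_n} | #|S| == m]| = 'C(n, m).
  by rewrite -(count_draws n m); apply: eq_card => S; rewrite [RHS]inE.
by move=> ->; rewrite addKn.
Qed.

Lemma alpha_le n m : alpha n m <= 'C(n, m).
Proof.
have := sum_if (fun S : {set 'I_n} => #|S| == m) (@symm n) 1 1.
rewrite (eq_bigr (fun _ => 1)); last by move=> S _; case: symm.
rewrite sum1_card !muln1 card_sym.
have -> : #|[pred S : {set 'I_n} | #|S| == m]| = 'C(n, m).
  by rewrite -(count_draws n m); apply: eq_card => S; rewrite [RHS]inE.
by move=> ->; rewrite leq_addr.
Qed.

Lemma N_decomp n U (X : nat -> nat) :
  (forall S : {set 'I_n}, ~~ symm S ->
     #|[set f : rule n | (ess f == S) && (stab f == U)]| = X #|S|) ->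
  N n U = \sum_(m < n.+1) (alpha n m * #|B m U| + ('C(n, m) - alpha n m) * X m).
Proof.
move=> HX.
rewrite /N -sum1_card (partition_big (fun f => @ess n f) predT) //=.
rewrite (eq_bigr (fun S => if symm S then #|B #|S| U| else X #|S|)); last first.
  move=> S _; rewrite sum1_card.
  case: (boolP (symm S)) => sS; [rewrite -(DL_sym U sS)|rewrite -(HX S sS)];
  by apply: eq_card => f; rewrite [LHS]unfold_in /= !inE andbC.
rewrite (partition_big (fun S : {set 'I_n} => inord #|S| : 'I_n.+1) predT) //=.
apply: eq_bigr => m _.
rewrite (eq_bigr (fun S => if symm S then #|B m U| else X m)); last first.
  by move=> S /eqP <-; rewrite inordK // ltnS -[n in _ <= n](card_ord n) max_card.
rewrite (eq_bigl (fun S : {set 'I_n} => #|S| == m)); last first.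
  move=> S; have hS : #|S| < n.+1 by rewrite ltnS -[n in _ <= n](card_ord n) max_card.
  apply/eqP/eqP => [<-|E]; first by rewrite inordK.
  by apply: val_inj; rewrite /= inordK // E.
by rewrite sum_if card_sym card_nsym.
Qed.


Lemma cardU1 : #|U1| = 1%N. Proof. by rewrite cards1. Qed.
Lemma cardUr : #|Ur| = 2%N. Proof. by rewrite cards2. Qed.
Lemma cardUc : #|Uc| = 2%N. Proof. by rewrite cards2. Qed.
Lemma cardUrc : #|Urc| = 2%N. Proof. by rewrite cards2. Qed.
Lemma cardUS2 : #|US2| = 4%N. Proof. by rewrite cardsT card_prod card_bool. Qed.

Lemma alpha_nn n : alpha n n = 1%N.
Proof. by rewrite /alpha; case: (odd n) => //=; rewrite binn. Qed.

Local Open Scope ring_scope.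

Lemma beta_nn n : beta n n = 0.
Proof. by rewrite /beta alpha_nn binn subrr. Qed.

Lemma natB_beta n m : (('C(n, m) - alpha n m)%N%:R : rat) = beta n m.
Proof. by rewrite natrB ?alpha_le. Qed.

Lemma N_rat n U (X : nat -> nat) :
  (forall S : {set 'I_n}, ~~ symm S ->
     #|[set f : rule n | (ess f == S) && (stab f == U)]| = X #|S|) ->
  (N n U)%:R = \sum_(m < n.+1) ((alpha n m)%:R * (#|B m U|)%:R + beta n m * (X m)%:R) :> rat.
Proof.
move=> HX; rewrite (N_decomp HX) natr_sum; apply: eq_bigr => m _.
by rewrite natrD !natrM natB_beta.
Qed.

Lemma t_rat n U : (#|t n U|)%:R * 4 = (N n U)%:R * (#|U|)%:R :> rat.
Proof. by rewrite -!natrM orbit_t. Qed.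
Lemma tbar_rat n U : (#|tbar n U|)%:R * 4 = (#|B n U|)%:R * (#|U|)%:R :> rat.
Proof. by rewrite -!natrM orbit_tbar. Qed.

Lemma X0 n U : U \in [:: Ur; Urc; US2] -> forall S : {set 'I_n}, ~~ symm S ->
  #|[set f : rule n | (ess f == S) && (stab f == U)]| = (fun _ => 0%N) #|S|.
Proof. by move=> UU S nS; rewrite DL_nsym_0. Qed.

Lemma case_simple n U : U \in [:: Ur; Urc; US2] ->
  (#|tbar n U|)%:R = (#|t n U|)%:R
        - \sum_(m < n) (alpha n m)%:R * (#|tbar m U|)%:R :> rat.
Proof.
move=> UU.
have kU : (#|U|)%:R != 0 :> rat.
  by move: UU; rewrite !inE => /or3P [] /eqP ->; rewrite ?cardUr ?cardUrc ?cardUS2.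
have M m : (#|B m U|)%:R = (#|tbar m U|)%:R * 4 / (#|U|)%:R :> rat.
  by rewrite tbar_rat mulfK.
have T : (#|t n U|)%:R = (N n U)%:R * (#|U|)%:R / 4 :> rat.
  by rewrite -t_rat mulfK.
rewrite T (N_rat (X0 UU)) big_ord_recr /= alpha_nn beta_nn.
rewrite (eq_bigr (fun m : 'I_n => (alpha n m)%:R * (#|tbar m U|)%:R * 4 / (#|U|)%:R)); last first.
  by move=> m _; rewrite M mulr0 addr0 !mulrA.
rewrite -mulr_suml -mulr_suml M mulr0 addr0 mul1r.
by field; rewrite kU.
Qed.

Lemma case_c n :
  (#|tbar n Uc|)%:R = (#|t n Uc|)%:R
        - \sum_(m < n) (('C(n, m))%:R * (#|tbar m Uc|)%:R
                        + 2^-1 * beta n m * (#|tbar m US2|)%:R) :> rat.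
Proof.
have Mc m : (#|B m Uc|)%:R = (#|tbar m Uc|)%:R * 2 :> rat.
  by have := tbar_rat m Uc; rewrite cardUc /=; lra.
have MS m : (#|B m US2|)%:R = (#|tbar m US2|)%:R :> rat.
  by have := tbar_rat m US2; rewrite cardUS2 /=; lra.
have T : (#|t n Uc|)%:R = (N n Uc)%:R / 2 :> rat.
  by have := t_rat n Uc; rewrite cardUc /=; lra.
have HX : forall S : {set 'I_n}, ~~ symm S ->
  #|[set f : rule n | (ess f == S) && (stab f == Uc)]| =
  (fun m => #|B m Uc| + #|B m US2|)%N #|S| by move=> S nS; rewrite DL_nsym_c.
rewrite T (N_rat (X := fun m => (#|B m Uc| + #|B m US2|)%N) HX) big_ord_recr /= alpha_nn beta_nn.
rewrite (eq_bigr (fun m : 'I_n => 2 * (('C(n, m))%:R * (#|tbar m Uc|)%:R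
                        + 2^-1 * beta n m * (#|tbar m US2|)%:R))); last first.
  by move=> m _; rewrite natrD Mc MS /beta; field.
rewrite -mulr_sumr Mc; lra.
Qed.

Lemma case_1 n :
  (#|tbar n U1|)%:R = (#|t n U1|)%:R
        - \sum_(m < n) (('C(n, m))%:R * (#|tbar m U1|)%:R
                        + 2^-1 * beta n m * ((#|tbar m Ur|)%:R + (#|tbar m Urc|)%:R)) :> rat.
Proof.
have M1 m : (#|B m U1|)%:R = (#|tbar m U1|)%:R * 4 :> rat.
  by have := tbar_rat m U1; rewrite cardU1 /=; lra.
have Mr m : (#|B m Ur|)%:R = (#|tbar m Ur|)%:R * 2 :> rat.
  by have := tbar_rat m Ur; rewrite cardUr /=; lra.
have Mrc m : (#|B m Urc|)%:R = (#|tbar m Urc|)%:R * 2 :> rat.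
  by have := tbar_rat m Urc; rewrite cardUrc /=; lra.
have T : (#|t n U1|)%:R = (N n U1)%:R / 4 :> rat.
  by have := t_rat n U1; rewrite cardU1 /=; lra.
have HX : forall S : {set 'I_n}, ~~ symm S ->
  #|[set f : rule n | (ess f == S) && (stab f == U1)]| =
  (fun m => #|B m U1| + #|B m Ur| + #|B m Urc|)%N #|S| by move=> S nS; rewrite DL_nsym_1.
rewrite T (N_rat (X := fun m => (#|B m U1| + #|B m Ur| + #|B m Urc|)%N) HX) big_ord_recr /= alpha_nn beta_nn.
rewrite (eq_bigr (fun m : 'I_n => 4 * (('C(n, m))%:R * (#|tbar m U1|)%:R
          + 2^-1 * beta n m * ((#|tbar m Ur|)%:R + (#|tbar m Urc|)%:R)))); last first.
  by move=> m _; rewrite !natrD M1 Mr Mrc /beta; field.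
rewrite -mulr_sumr M1; lra.
Qed.

Unset Implicit Arguments.

Theorem proposition6 (n : nat) :
  [/\ (#|tbar n US2|)%:R = (#|t n US2|)%:R
        - \sum_(m < n) (alpha n m)%:R * (#|tbar m US2|)%:R :> rat,
      (#|tbar n Ur|)%:R = (#|t n Ur|)%:R
        - \sum_(m < n) (alpha n m)%:R * (#|tbar m Ur|)%:R :> rat,
      (#|tbar n Urc|)%:R = (#|t n Urc|)%:R
        - \sum_(m < n) (alpha n m)%:R * (#|tbar m Urc|)%:R :> rat,
      (#|tbar n Uc|)%:R = (#|t n Uc|)%:R
        - \sum_(m < n) (('C(n, m))%:R * (#|tbar m Uc|)%:R
                        + 2^-1 * beta n m * (#|tbar m US2|)%:R) :> rat
    & (#|tbar n U1|)%:R = (#|t n U1|)%:R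
        - \sum_(m < n) (('C(n, m))%:R * (#|tbar m U1|)%:R
                        + 2^-1 * beta n m * ((#|tbar m Ur|)%:R + (#|tbar m Urc|)%:R)) :> rat].
Proof.
split; try (by apply: case_simple; rewrite !inE eqxx ?orbT).
  exact: case_c.
exact: case_1.
Qed.
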